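(* Let $v_j,v_i\in V(D^+)\setminus\{s\}$ be distinct vertices with $d_s(v_j)\le d_s(v_i)$. If $y\in C(v_j)\cap C(v_i)$ and $v_j$ is not an ancestor of $v_i$ in $D^+$, then $g^*(v_j)\neq\infty$ and $\min_{u\prec y} g(v_i,u)\ge g^*(v_j)$.
   Context: $G=(V,E,w)$ is a simple, connected, undirected graph with positive edge lengths, $s,t\in V$, $d(\cdot,\cdot)$ the shortest path distance in $G$, $d_s(v)=d(s,v)$. $D$ is the union of all shortest $st$-paths of $G$, and $D^+$ is the directed acyclic graph obtained from $D$ by orienting every edge toward $t$. $x\prec y$ means $x$ is an ancestor of $y$ in $D^+$ (a directed path of positive length from $x$ to $y$ exists). For $x\neq s$, $v\neq x$ is an $s$-dominator of $x$ if every directed path from $s$ to $x$ in $D^+$ contains $v$, and $I_s(x)$ is the $s$-dominator of $x$ closest to $x$ (every other $s$-dominator of $x$ is an $s$-dominator of $I_s(x)$). Symmetrically, for $x\neq t$, $v\neq x$ is a $t$-dominator of $x$ if every directed path from $x$ to $t$ in $D^+$ contains $v$, and $I_t(x)$ is the $t$-dominator closest to $x$. For $x\neq s$, $C(x)=\{v: I_s(x)\prec v\prec x\}$. For $x\neq s$ and $y\in V(D^+)$, $g(x,y)=d(y,x)$ if $y\in C(x)$ and $x\prec I_t(y)$, and $g(x,y)=\infty$ otherwise; $g^*(x)=\min_y g(x,y)$. A minimum over the empty set is $\infty$. *)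

(* Defs.v *)
From HB Require Import structures.
From mathcomp Require Import all_boot all_order all_algebra.
From mathcomp Require Import boolp classical_sets reals constructive_ereal ereal.
Set Implicit Arguments. Unset Strict Implicit. Unset Printing Implicit Defensive.
Import Order.TTheory GRing.Theory Num.Theory.
Local Open Scope ring_scope.
Local Open Scope classical_set_scope.

(* The graph G = (V, E, w): V a finite type, E given by the boolean relation e
   (simple undirected graph: e symmetric and irreflexive, hypotheses of the theorem),
   w the edge-length function (only its values on edges matter). *)
Section SPDag.
Variables (R : realType) (V : finType) (e : rel V) (w : V -> V -> R) (s t : V).

Fixpoint wlen (x : V) (p : seq V) : R :=
  if p is y :: q then w x y + wlen y q else 0.

Definition walks (x y : V) : set (seq V) :=
  [set p | path e x p /\ last x p = y].

Definition dist (x y : V) : R :=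
  fine (ereal_inf [set (wlen x p)%:E | p in walks x y]).

Definition sp_st (p : seq V) : Prop := walks s t p /\ wlen s p = dist s t.

Definition inD (v : V) : Prop := exists p, sp_st p /\ v \in s :: p.

Definition arcD (u v : V) : Prop :=
  exists p, sp_st p /\ exists p1 p2, s :: p = p1 ++ u :: v :: p2.
Definition arcb (u v : V) : bool := `[< arcD u v >].

Definition dpath (x : V) (p : seq V) (y : V) : Prop := path arcb x p /\ last x p = y.

(* x ≺ y : directed path of positive length from x to y *)
Definition anc (x y : V) : Prop := exists p, p <> [::] /\ dpath x p y.

Definition sdom (v x : V) : Prop :=
  inD x /\ x <> s /\ v <> x /\ forall p, dpath s p x -> v \in s :: p.
Definition tdom (v x : V) : Prop :=
  inD x /\ x <> t /\ v <> x /\ forall p, dpath x p t -> v \in x :: p.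

(* v is the s-dominator of x closest to x *)
Definition is_Is (x v : V) : Prop :=
  sdom v x /\ forall u, sdom u x -> u <> v -> sdom u v.
Definition is_It (x v : V) : Prop :=
  tdom v x /\ forall u, tdom u x -> u <> v -> tdom u v.

Definition Is (x : V) : option V := [pick v | `[< is_Is x v >] ].
Definition It (x : V) : option V := [pick v | `[< is_It x v >] ].

Definition inC (x v : V) : Prop :=
  if Is x is Some a then anc a v /\ anc v x else False.

Definition g (x y : V) : \bar R :=
  if `[< inC x y /\ (if It y is Some b then anc x b else False) >]
  then (dist y x)%:E else +oo%E.

Definition gstar (x : V) : \bar R :=
  \big[Order.min/+oo%E]_(y | `[< inD y >]) g x y.

End SPDag.

(* Main.v *)
Require Import Defs.
From HB Require Import structures.
From mathcomp Require Import all_boot all_order all_algebra.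
From mathcomp Require Import boolp classical_sets reals constructive_ereal ereal.
From mathcomp Require Import lra.
Set Implicit Arguments. Unset Strict Implicit. Unset Printing Implicit Defensive.
Import Order.TTheory GRing.Theory Num.Theory.
Local Open Scope ring_scope.
Local Open Scope classical_set_scope.

Section Aux.
Variables (R : realType) (V : finType) (e : rel V) (w : V -> V -> R) (s t : V).
Hypothesis e_conn : forall x y : V, connect e x y.
Hypothesis w_pos : forall x y : V, e x y -> 0 < w x y.

Lemma wlen_cat x p q : wlen w x (p ++ q) = wlen w x p + wlen w (last x p) q.
Proof. by elim: p x => [|y p IH] x /=; rewrite ?add0r // IH addrA. Qed.

Lemma wlen_ge0 x p : path e x p -> 0 <= wlen w x p.
Proof.
elim: p x => [|y p IH] x //= /andP[exy Hp].
by apply: addr_ge0; [apply: ltW; apply: w_pos | apply: IH].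
Qed.

Lemma wlen_gt0 x p : path e x p -> p <> [::] -> 0 < wlen w x p.
Proof.
case: p => [|y p] //= /andP[exy Hp] _.
have := w_pos exy; have := wlen_ge0 Hp; lra.
Qed.

Lemma walks_ex x y : exists p, walks e x y p.
Proof.
have /connectP[p Hp ->] := e_conn x y. by exists p.
Qed.

Lemma dist_EFin x y :
  ((dist e w x y)%:E = ereal_inf [set (wlen w x p)%:E | p in walks e x y])%E.
Proof.
set S := [set (wlen w x p)%:E | p in walks e x y].
have [p0 Hp0] := walks_ex x y.
have H0 : (0%:E <= ereal_inf S)%E.
  apply: le_ereal_inf_tmp => _ [p [Hp _] <-]; rewrite lee_fin; exact: wlen_ge0.
have H1 : (ereal_inf S <= (wlen w x p0)%:E)%E.
  by apply: ereal_inf_lbound; exists p0.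
rewrite /dist -/S; move: H0 H1; case: (ereal_inf S) => //.
Qed.

Lemma dist_le x y p : walks e x y p -> dist e w x y <= wlen w x p.
Proof.
move=> Hp; rewrite -lee_fin dist_EFin; apply: ereal_inf_lbound; by exists p.
Qed.

Lemma dist_ge x y r : (forall p, walks e x y p -> r <= wlen w x p) -> r <= dist e w x y.
Proof.
move=> H; rewrite -lee_fin dist_EFin; apply: le_ereal_inf_tmp => _ [p Hp <-].
by rewrite lee_fin; apply: H.
Qed.

Lemma dist_ge0 x y : 0 <= dist e w x y.
Proof. by apply: dist_ge => p [Hp _]; apply: wlen_ge0. Qed.

Lemma dist_tri x y z : dist e w x z <= dist e w x y + dist e w y z.
Proof.
have H1 : forall p q, walks e x y p -> walks e y z q ->
   dist e w x z <= wlen w x p + wlen w y q.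
  move=> p q [Hp Lp] [Hq Lq].
  have W : walks e x z (p ++ q).
    by split; [rewrite cat_path Hp Lp Hq | rewrite last_cat Lp].
  by apply: le_trans (dist_le W) _; rewrite wlen_cat Lp.
have H2 : forall q, walks e y z q -> dist e w x z - wlen w y q <= dist e w x y.
  move=> q Hq; apply: dist_ge => p Hp; have := H1 p q Hp Hq; lra.
have H3 : dist e w x z - dist e w x y <= dist e w y z.
  apply: dist_ge => q Hq; have := H2 q Hq; lra.
lra.
Qed.

Lemma dist_refl x : dist e w x x = 0.
Proof.
apply/eqP; rewrite eq_le dist_ge0 andbT.
by apply: le_trans (dist_le (p := [::]) _) _ => //.
Qed.


Lemma sorted_mid (r : rel V) l1 u v l2 : sorted r (l1 ++ u :: v :: l2) -> r u v.
Proof.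
elim: l1 => [|a l1 IH] /=; first by case/andP.
by move/path_sorted; apply: IH.
Qed.

Lemma path_of_splits (r : rel V) pre x p :
  (forall p1 p2 u v, pre ++ x :: p = p1 ++ u :: v :: p2 -> r u v) -> path r x p.
Proof.
elim: p pre x => [|y p IH] pre x //= H.
apply/andP; split; first by apply: (H pre p).
apply: (IH (rcons pre x)) => p1 p2 u v E; apply: (H p1 p2).
by rewrite -E -cats1 -catA.
Qed.

Lemma path_split (r : rel V) x p u : path r x p -> u \in x :: p ->
  exists p1 p2, [/\ p = p1 ++ p2, last x p1 = u, path r x p1 & path r u p2].
Proof.
move=> Hp; rewrite inE; case/orP => [/eqP -> | Hu].
  by exists [::], p.
case/splitPr: Hu Hp => p1 p2 Hp.
exists (rcons p1 u), p2; rewrite cat_rcons last_rcons rcons_path.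
by move: Hp; rewrite cat_path /= => /and3P[-> -> ->].
Qed.

Lemma sp_split p q1 q2 : sp_st e w s t p -> p = q1 ++ q2 ->
  dist e w s (last s q1) = wlen w s q1.
Proof.
move=> [[Hp Lp] Wp] E; set m := last s q1.
move: Hp Lp Wp; rewrite E cat_path last_cat wlen_cat -/m => /andP[H1 H2] L W.
have d1 : dist e w s m <= wlen w s q1 by apply: dist_le.
have d2 : dist e w m t <= wlen w m q2 by apply: dist_le.
have d3 := dist_tri s m t.
lra.
Qed.

Lemma arc_edge u v : arcD e w s t u v ->
  e u v /\ dist e w s v = dist e w s u + w u v.
Proof.
move=> [p [Hsp [p1 [p2 E]]]].
have He : e u v.
  by apply: (sorted_mid (l1 := p1) (l2 := p2)); rewrite -E /=; case: Hsp => [[]].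
split => //.
have [q1 [Eq Lq]] : exists q1, p = q1 ++ v :: p2 /\ last s q1 = u.
  case: p1 E => [|a p1] /= [].
    by move=> <- ->; exists [::].
  by move=> _ ->; exists (rcons p1 u); rewrite cat_rcons last_rcons.
have A := sp_split Hsp Eq.
have B : dist e w s (last s (rcons q1 v)) = wlen w s (rcons q1 v).
  by apply: (sp_split (q2 := p2) Hsp); rewrite Eq cat_rcons.
move: A B; rewrite last_rcons -cats1 wlen_cat Lq /= addr0 => -> ->.
by [] || rewrite Lq.
Qed.

Lemma arc_inD u v : arcD e w s t u v -> inD e w s t u /\ inD e w s t v.
Proof.
move=> [p [Hsp [p1 [p2 E]]]]; split; exists p; split => //; rewrite E mem_cat inE.
  by rewrite eqxx orbT.
by rewrite !inE eqxx !orbT.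
Qed.

Lemma arcbP u v : arcb e w s t u v <-> arcD e w s t u v.
Proof. by rewrite /arcb; split => [/asboolP|H]; [|apply/asboolP]. Qed.

Lemma sp_dpath p : sp_st e w s t p -> path (arcb e w s t) s p.
Proof.
move=> Hsp; apply: (path_of_splits (pre := [::])) => p1 p2 u v E.
by apply/arcbP; exists p; split => //; exists p1, p2.
Qed.

Lemma dpath_edge x p : path (arcb e w s t) x p -> path e x p.
Proof. by apply: sub_path => u v /arcbP /arc_edge []. Qed.

Lemma dpath_dist x p : path (arcb e w s t) x p ->
  dist e w s (last x p) = dist e w s x + wlen w x p.
Proof.
elim: p x => [|y p IH] x /=; first by rewrite addr0.
case/andP => /arcbP /arc_edge [_ E] /IH ->; by rewrite E addrA.
Qed.

Lemma dpath_cat x p y q z : dpath e w s t x p y -> dpath e w s t y q z ->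
  dpath e w s t x (p ++ q) z.
Proof.
move=> [Hp Lp] [Hq Lq]; split; first by rewrite cat_path Hp Lp Hq.
by rewrite last_cat Lp.
Qed.

Lemma anc_trans x y z : anc e w s t x y -> anc e w s t y z -> anc e w s t x z.
Proof.
move=> [p [Np Hp]] [q [_ Hq]]; exists (p ++ q); split; last exact: dpath_cat Hq.
by case: p Np {Hp}.
Qed.

Lemma anc_lt x y : anc e w s t x y -> dist e w s x < dist e w s y.
Proof.
move=> [p [Np [Hp Lp]]]; rewrite -Lp dpath_dist //.
have := wlen_gt0 (dpath_edge Hp) Np; lra.
Qed.

Lemma anc_neq x y : anc e w s t x y -> x <> y.
Proof. by move=> /anc_lt H E; move: H; rewrite E ltxx. Qed.

Lemma anc_inD x y : anc e w s t x y -> inD e w s t x /\ inD e w s t y.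
Proof.
move=> [p [Np [Hp Lp]]]; split.
  case: p Np Hp {Lp} => [|a p] //= _ /andP[/arcbP /arc_inD [] //].
case/lastP: p Np Hp Lp => [|p a] // _; rewrite rcons_path last_rcons => /andP[_].
by move/arcbP /arc_inD => [_ H] <-.
Qed.

Lemma inD_to_t v : inD e w s t v -> exists q, dpath e w s t v q t.
Proof.
move=> [p [Hsp Hv]]; have Hp := sp_dpath Hsp.
have [p1 [p2 [E L1 H1 H2]]] := path_split Hp Hv.
exists p2; split => //; case: Hsp => [[_ Lp] _].
by rewrite -Lp E last_cat L1.
Qed.

Lemma dpath_split x p y u : dpath e w s t x p y -> u \in x :: p ->
  exists p1 p2, [/\ p = p1 ++ p2, dpath e w s t x p1 u & dpath e w s t u p2 y].
Proof.
move=> [Hp Lp] Hu; have [p1 [p2 [E L1 H1 H2]]] := path_split Hp Hu.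
exists p1, p2; split => //; split => //.
by rewrite -Lp E last_cat L1.
Qed.

Lemma anc_of_mem x p y u : dpath e w s t x p y -> u \in x :: p -> u <> y ->
  anc e w s t u y.
Proof.
move=> Hd Hu Nu; have [p1 [p2 [_ _ [H2 L2]]]] := dpath_split Hd Hu.
exists p2; split => //; by case: p2 {H2} L2 => //= H; case: Nu.
Qed.

Lemma anc_to_mem x p y u : dpath e w s t x p y -> u \in x :: p -> u <> x ->
  anc e w s t x u.
Proof.
move=> Hd Hu Nu; have [p1 [p2 [_ [H1 L1] _]]] := dpath_split Hd Hu.
exists p1; split => //; by case: p1 {H1} L1 => //= H; case: Nu.
Qed.


Lemma exists_max (P : V -> Prop) (f : V -> R) x0 : P x0 ->
  exists x, P x /\ forall y, P y -> f y <= f x.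
Proof.
move=> H0.
case: (@arg_maxP _ _ V x0 (fun x => `[< P x >]) f (asboolT H0)) => x /asboolP Px Hx.
by exists x; split => // y Py; apply: Hx; apply/asboolP.
Qed.

Lemma It_exists z : inD e w s t z -> z <> t -> exists b, is_It e w s t z b.
Proof.
move=> Hz Nzt.
have Ht : tdom e w s t t z.
  split => //; split => //; split; first by move=> E; apply: Nzt.
  by move=> p [_ <-]; apply: mem_last.
have [b [Hb Hmin]] := @exists_max (fun x => tdom e w s t x z) (fun x => - dist e w s x) t Ht.
exists b; split => // u Hu Nub.
have [P0 HP0] := inD_to_t Hz.
case: (Hb) => [_ [_ [Nbz Hb4]]].
case: (Hu) => [_ [_ [Nuz Hu4]]].
have Hmu : dist e w s b <= dist e w s u by have := Hmin u Hu; lra.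
have Hzb : anc e w s t z b by apply: (anc_to_mem HP0 (Hb4 _ HP0)).
split; first by case: (anc_inD Hzb).
split.
  move=> Ebt; have Hut : anc e w s t u t.
    by apply: (anc_of_mem HP0 (Hu4 _ HP0)); rewrite -Ebt.
  have := anc_lt Hut; rewrite -Ebt; lra.
split => // Q HQ.
have [p1 [p2 [_ Hp1 _]]] := dpath_split HP0 (Hb4 _ HP0).
have := Hu4 _ (dpath_cat Hp1 HQ); rewrite -cat_cons mem_cat => /orP[Hu1|HuQ].
  have := anc_lt (anc_of_mem Hp1 Hu1 Nub); lra.
by rewrite inE HuQ orbT.
Qed.

Lemma main_lemma (vj vi y : V) :
  inD e w s t vj -> inD e w s t vi -> vj <> vi ->
  dist e w s vj <= dist e w s vi ->
  inC e w s t vj y -> inC e w s t vi y ->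
  ~ anc e w s t vj vi ->
  (gstar e w s t vj != +oo)%E /\
  (gstar e w s t vj <=
     \big[Order.min/+oo%E]_(u | `[< anc e w s t u y >]) g e w s t vi u)%E.
Proof.
move=> Hj Hi Nji Hd HCj HCi Hna.
move: HCj; rewrite /inC; case Ea: (Is e w s t vj) => [a|] // [Hay Hyj].
move: HCi; rewrite /inC; case: (Is e w s t vi) => [a'|] // [_ Hyi].
have Nij : ~ anc e w s t vi vj by move=> /anc_lt; lra.
pose cand x := (x = y \/ anc e w s t y x) /\ anc e w s t x vj /\
  exists Q, dpath e w s t x Q t /\ vj \notin x :: Q.
have Cy : cand y.
  split; first by left.
  split => //.
  have [Py [NPy HPy]] := Hyi.
  have [Qi HQi] := inD_to_t Hi.
  exists (Py ++ Qi); split; first exact: dpath_cat HQi.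
  rewrite -cat_cons mem_cat negb_or; apply/andP; split; apply/negP => H.
    by apply: Hna; apply: (anc_of_mem HPy H).
  by apply: Nij; apply: (anc_to_mem HQi) => [|E]; [rewrite inE H orbT | apply: Nji].
have [z [Cz Hmax]] := exists_max (dist e w s) Cy.
case: (Cz) => [Hyz [Hzj [Qz [HQz Nvj]]]].
have Hdyz : dist e w s y <= dist e w s z.
  by case: Hyz => [-> // | /anc_lt /ltW].
have Haz : anc e w s t a z.
  by case: Hyz => [E | H]; [rewrite E | apply: anc_trans H].
have HzD : inD e w s t z by case: (anc_inD Hzj).
have Nzt : z <> t.
  move=> Ezt; have [Qj [HQj LQj]] := inD_to_t Hj.
  have := anc_lt Hzj; have := dpath_dist HQj; rewrite LQj Ezt.
  have := wlen_ge0 (dpath_edge HQj); lra.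
have [b' [HIt Hb']] : exists b', It e w s t z = Some b' /\ is_It e w s t z b'.
  rewrite /It; case: pickP => [b' /asboolP Hb' | Hn]; first by exists b'.
  have [b Hb] := It_exists HzD Nzt.
  by move: (Hn b); rewrite (asboolT Hb).
case: Hb' => [[_ [_ [Nbz Hb4]]] _].
have [P' [NP' HP']] := Hzj.
have [Qj HQj] := inD_to_t Hj.
have Nbj : b' <> vj.
  by move=> E; move: Nvj; rewrite -E (Hb4 _ HQz).
have Hjb : anc e w s t vj b'.
  have := Hb4 _ (dpath_cat HP' HQj); rewrite -cat_cons mem_cat => /orP[H1|H2].
    have Hzb := anc_to_mem HP' H1 Nbz.
    have Hbj := anc_of_mem HP' H1 Nbj.
    have Cb : cand b'.
      split; first by right; case: Hyz => [E | H]; [rewrite -E | apply: anc_trans H Hzb].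
      split => //.
      have [q1 [q2 [Eq _ Hq2]]] := dpath_split HQz (Hb4 _ HQz).
      exists q2; split => //; apply/negP => H; move: Nvj.
      rewrite inE in H; case/orP: H => [/eqP E | H]; first by case: Nbj.
      by rewrite Eq inE mem_cat H !orbT.
    have := Hmax _ Cb; have := anc_lt Hzb; lra.
  by apply: (anc_to_mem HQj); rewrite ?inE ?H2 ?orbT.
have Hg : g e w s t vj z = (dist e w z vj)%:E.
  rewrite /g asboolT //; split; first by rewrite /inC Ea.
  by rewrite HIt.
have Hgs : (gstar e w s t vj <= (dist e w z vj)%:E)%E.
  rewrite /gstar (bigD1 z) /=; last exact: asboolT.
  by rewrite Hg ge_min lexx.
have Hdz : dist e w z vj <= dist e w s vj - dist e w s z.
  case: HP' => [H1 L1]; have := dist_le (x := z) (y := vj) (p := P').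
  have := dpath_dist H1; rewrite L1 => ->.
  move=> H; have := H (conj (dpath_edge H1) L1); lra.
split.
  by apply/eqP => E; move: Hgs; rewrite E leye_eq.
apply: le_trans Hgs _.
apply: (big_ind (fun x => (dist e w z vj)%:E <= x)%E) => //.
- exact: leey.
- by move=> x1 x2 H1 H2; rewrite le_min H1 H2.
move=> u /asboolP Huy; rewrite /g; case: asboolP => _; last exact: leey.
rewrite lee_fin.
have := anc_lt Huy; have := dist_tri s u vi; lra.
Qed.

End Aux.

Unset Implicit Arguments.
Local Close Scope classical_set_scope.

Theorem corollary2 (R : realType) (V : finType) (e : rel V) (w : V -> V -> R)
  (s t : V)
  (e_sym : symmetric e) (e_irr : irreflexive e)
  (e_conn : forall x y : V, connect e x y)
  (w_sym : forall x y : V, w x y = w y x)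
  (w_pos : forall x y : V, e x y -> 0 < w x y)
  (vj vi y : V) :
  inD e w s t vj -> inD e w s t vi -> vj <> s -> vi <> s -> vj <> vi ->
  dist e w s vj <= dist e w s vi ->
  inC e w s t vj y -> inC e w s t vi y ->
  ~ anc e w s t vj vi ->
  (gstar e w s t vj != +oo)%E /\
  (gstar e w s t vj <=
     \big[Order.min/+oo%E]_(u | `[< anc e w s t u y >]) g e w s t vi u)%E.
Proof.
move=> Hj Hi _ _ Nji Hd HCj HCi Hna.
exact: (main_lemma e_conn w_pos Hj Hi Nji Hd HCj HCi Hna).
Qed.
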